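(* There is an absolute constant $C$ such that for all $R_1,R_2\ge1$ and all finitely supported non-negative measures $\mu,\nu$ on $[-1,1]^2$, $$\Big|\sum_{z,w}e^{i(R_1z_1w_1+R_2z_2w_2)}\mu(z)\nu(w)\Big|\le C(R_1R_2)^{\frac12}\Big(\sum_z\mu(z)\Big)^{\frac12}\Big(\sum_w\nu(w)\Big)^{\frac12}M_\mu^{\frac12}M_\nu^{\frac12},$$ where $M_\mu=\max_{\xi_1,\xi_2\in\mathbb{R}}\mu\big(B(\xi_1,\tfrac1{R_1})\times B(\xi_2,\tfrac1{R_2})\big)$ and similarly for $M_\nu$.
   Context: Here $z=(z_1,z_2)$, $w=(w_1,w_2)$ range over the supports of $\mu$ and $\nu$, $\mu(z)$ denotes the mass of $\mu$ at $z$, and $B(\xi,\rho)=[\xi-\rho,\xi+\rho]\subset\mathbb{R}$. *)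

(* Defs.v *)
From Stdlib Require Import Reals List ClassicalEpsilon.
From Coquelicot Require Import Coquelicot.
Open Scope R_scope.

(* A finitely supported non-negative measure on R^2, given as a finite list of
   atoms (point, mass).  mu(A) = sum of the masses of atoms lying in A.
   Repeated points are allowed; their masses add up. *)
Definition fmeasure := list ((R * R) * R).

Definition pt (a : (R * R) * R) : R * R := fst a.
Definition mass (a : (R * R) * R) : R := snd a.

Definition valid_measure (mu : fmeasure) : Prop :=
  forall a, In a mu ->
    0 <= mass a /\ -1 <= fst (pt a) <= 1 /\ -1 <= snd (pt a) <= 1.

Definition total_mass (mu : fmeasure) : R :=
  fold_right (fun a s => mass a + s) 0 mu.

Definition ind (P : Prop) : R :=
  match excluded_middle_informative P with left _ => 1 | right _ => 0 end.

Definition measure_of (mu : fmeasure) (A : R * R -> Prop) : R :=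
  fold_right (fun a s => ind (A (pt a)) * mass a + s) 0 mu.

Definition Bint (xi rho x : R) : Prop := xi - rho <= x <= xi + rho.

Definition box_mass (mu : fmeasure) (R1 R2 xi1 xi2 : R) : R :=
  measure_of mu (fun z => Bint xi1 (/ R1) (fst z) /\ Bint xi2 (/ R2) (snd z)).

Definition is_M (mu : fmeasure) (R1 R2 M : R) : Prop :=
  (forall xi1 xi2, box_mass mu R1 R2 xi1 xi2 <= M) /\
  (exists xi1 xi2, box_mass mu R1 R2 xi1 xi2 = M).

Definition cexpi (t : R) : C := (cos t, sin t).

Definition osc_sum (R1 R2 : R) (mu nu : fmeasure) : C :=
  fold_right (fun a s =>
    Cplus (fold_right (fun b t =>
      Cplus (Cmult (cexpi (R1 * fst (pt a) * fst (pt b) + R2 * snd (pt a) * snd (pt b)))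
                   (RtoC (mass a * mass b))) t) (RtoC 0) nu) s) (RtoC 0) mu.

(* Main.v *)
Require Import Defs.
From Stdlib Require Import Reals List Lra Lia ZArith ClassicalEpsilon.
From Coquelicot Require Import Coquelicot.
Open Scope R_scope.

Definition sR {A} (l : list A) (f : A -> R) : R := fold_right (fun a s => f a + s) 0 l.
Definition sC {A} (l : list A) (f : A -> C) : C := fold_right (fun a s => Cplus (f a) s) (RtoC 0) l.


Lemma sR_nil {A : Type} (f : A -> R) : sR nil f = 0. Proof. reflexivity. Qed.
Lemma sR_cons {A : Type} a l (f : A -> R) : sR (a::l) f = f a + sR l f. Proof. reflexivity. Qed.
Lemma sC_nil {A : Type} (f : A -> C) : sC nil f = RtoC 0. Proof. reflexivity. Qed.
Lemma sC_cons {A : Type} a l (f : A -> C) : sC (a::l) f = Cplus (f a) (sC l f). Proof. reflexivity. Qed.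

Lemma sR_ext {A : Type} l (f g : A -> R) : (forall a, In a l -> f a = g a) -> sR l f = sR l g.
Proof. induction l; simpl; intros H; auto. rewrite H, IHl; auto. Qed.
Lemma sC_ext {A : Type} l (f g : A -> C) : (forall a, In a l -> f a = g a) -> sC l f = sC l g.
Proof. induction l; simpl; intros H; auto. rewrite H, IHl; auto. Qed.
Lemma sR_le {A : Type} l (f g : A -> R) : (forall a, In a l -> f a <= g a) -> sR l f <= sR l g.
Proof. induction l; simpl; intros H. lra.
 assert (sR l f <= sR l g) by auto. specialize (H a (or_introl eq_refl)). lra. Qed.
Lemma sR_nonneg {A : Type} l (f : A -> R) : (forall a, In a l -> 0 <= f a) -> 0 <= sR l f.
Proof. intros H. induction l; simpl. lra.
 assert (0 <= f a) by (apply H; simpl; auto). assert (0 <= sR l f) by (apply IHl; intros; apply H; simpl; auto). lra. Qed.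
Lemma sR_plus {A : Type} l (f g : A -> R) : sR l (fun a => f a + g a) = sR l f + sR l g.
Proof. induction l; simpl; lra. Qed.
Lemma sR_scal {A : Type} l c (f : A -> R) : sR l (fun a => c * f a) = c * sR l f.
Proof. induction l; simpl. ring. rewrite IHl; ring. Qed.
Lemma sR_scal_r {A : Type} l c (f : A -> R) : sR l (fun a => f a * c) = sR l f * c.
Proof. induction l; simpl. ring. rewrite IHl; ring. Qed.
Lemma sR_const {A : Type} l c : sR l (fun _ : A => c) = INR (length l) * c.
Proof. induction l; simpl length; rewrite ?S_INR; simpl. ring. rewrite IHl; ring. Qed.
Lemma sR_app {A : Type} l1 l2 (f : A -> R) : sR (l1 ++ l2) f = sR l1 f + sR l2 f.
Proof. induction l1; simpl. ring. rewrite IHl1; ring. Qed.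
Lemma sR_map {A B : Type} (g : B -> A) l (f : A -> R) : sR (map g l) f = sR l (fun b => f (g b)).
Proof. induction l; simpl; auto. rewrite IHl; auto. Qed.
Lemma sR_In_le {A : Type} l (f : A -> R) a : (forall x, In x l -> 0 <= f x) -> In a l -> f a <= sR l f.
Proof. induction l; simpl; intros H Hi. contradiction.
 destruct Hi as [<-|Hi].
 - assert (0 <= sR l f) by (apply sR_nonneg; auto). lra.
 - assert (f a <= sR l f) by auto. specialize (H a0 (or_introl eq_refl)). lra. Qed.
Lemma sR_swap {A B : Type} (l1 : list A) (l2 : list B) (f : A -> B -> R) :
  sR l1 (fun a => sR l2 (fun b => f a b)) = sR l2 (fun b => sR l1 (fun a => f a b)).
Proof. induction l1; simpl. induction l2; simpl; lra.
 rewrite IHl1, sR_plus. auto. Qed.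
Lemma sR_mult {A B : Type} (l1 : list A) (l2 : list B) f g :
  sR l1 f * sR l2 g = sR l1 (fun a => sR l2 (fun b => f a * g b)).
Proof. rewrite <- sR_scal_r. apply sR_ext; intros. rewrite <- sR_scal. auto. Qed.

Lemma sC_plus {A : Type} l (f g : A -> C) : sC l (fun a => Cplus (f a) (g a)) = Cplus (sC l f) (sC l g).
Proof. induction l; simpl. apply injective_projections; simpl; lra.
 rewrite IHl. ring. Qed.
Lemma sC_scal {A : Type} l c (f : A -> C) : sC l (fun a => Cmult c (f a)) = Cmult c (sC l f).
Proof. induction l; simpl. apply injective_projections; simpl; lra. rewrite IHl; ring. Qed.
Lemma sC_scal_r {A : Type} l c (f : A -> C) : sC l (fun a => Cmult (f a) c) = Cmult (sC l f) c.
Proof. induction l; simpl. apply injective_projections; simpl; lra. rewrite IHl; ring. Qed.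
Lemma sC_swap {A B : Type} (l1 : list A) (l2 : list B) (f : A -> B -> C) :
  sC l1 (fun a => sC l2 (fun b => f a b)) = sC l2 (fun b => sC l1 (fun a => f a b)).
Proof. induction l1; simpl. induction l2; simpl; auto. rewrite <- IHl2.
 apply injective_projections; simpl; lra.
 rewrite IHl1, sC_plus. auto. Qed.
Lemma sC_mult {A B : Type} (l1 : list A) (l2 : list B) f g :
  Cmult (sC l1 f) (sC l2 g) = sC l1 (fun a => sC l2 (fun b => Cmult (f a) (g b))).
Proof. rewrite <- sC_scal_r. apply sC_ext; intros. rewrite <- sC_scal. auto. Qed.
Lemma sC_conj {A : Type} l (f : A -> C) : Cconj (sC l f) = sC l (fun a => Cconj (f a)).
Proof. induction l; simpl. apply injective_projections; simpl; lra.
 rewrite Cplus_conj, IHl; auto. Qed.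
Lemma sC_RtoC {A : Type} l (f : A -> R) : RtoC (sR l f) = sC l (fun a => RtoC (f a)).
Proof. induction l; simpl; auto. rewrite <- IHl, RtoC_plus; auto. Qed.
Lemma Cmod_sC {A : Type} l (f : A -> C) : Cmod (sC l f) <= sR l (fun a => Cmod (f a)).
Proof. induction l; simpl. rewrite Cmod_0; lra.
 eapply Rle_trans. apply Cmod_triangle. lra. Qed.
Lemma sC_map {A B : Type} (g : B -> A) l (f : A -> C) : sC (map g l) f = sC l (fun b => f (g b)).
Proof. induction l; simpl; auto. rewrite IHl; auto. Qed.
Lemma sR_prod {A B : Type} (l1 : list A) (l2 : list B) f :
  sR (list_prod l1 l2) f = sR l1 (fun a => sR l2 (fun b => f (a,b))).
Proof. induction l1; simpl; auto. rewrite sR_app, sR_map, IHl1. auto. Qed.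
Lemma sC_app {A} l1 l2 (f : A -> C) : sC (l1 ++ l2) f = Cplus (sC l1 f) (sC l2 f).
Proof. induction l1; simpl. apply injective_projections; simpl; lra. rewrite IHl1; ring. Qed.
Lemma sC_prod {A B} (l1 : list A) (l2 : list B) f :
  sC (list_prod l1 l2) f = sC l1 (fun a => sC l2 (fun b => f (a,b))).
Proof. induction l1; simpl; auto. rewrite sC_app, sC_map, IHl1. auto. Qed.

Lemma CS {A} (l : list A) (a b : A -> R) : (forall x, In x l -> 0 <= a x) ->
  (sR l (fun x => a x * b x))^2 <= sR l a * sR l (fun x => a x * b x ^ 2).
Proof.
  intros Ha. set (S0 := sR l a). set (S1 := sR l (fun x => a x * b x)).
  set (S2 := sR l (fun x => a x * b x ^ 2)).
  assert (H0 : 0 <= S0) by (apply sR_nonneg; auto).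
  assert (Hq : forall t, 0 <= S2 - 2 * t * S1 + t^2 * S0).
  { intros t. assert (E : S2 - 2 * t * S1 + t^2 * S0 = sR l (fun x => a x * (b x - t)^2)).
    { transitivity (sR l (fun x => a x * b x^2 + ((-2*t) * (a x * b x) + t^2 * a x))).
      rewrite sR_plus, sR_plus, sR_scal, sR_scal. unfold S0,S1,S2; ring.
      apply sR_ext; intros; ring. }
    rewrite E. apply sR_nonneg; intros y Hy. apply Rmult_le_pos; [auto | apply pow2_ge_0]. }
  destruct (Req_dec S0 0) as [Z0|Z0].
  - assert (S1 = 0).
    { destruct (Req_dec S1 0); auto. exfalso.
      specialize (Hq ((S2 + 1) / (2 * S1))). rewrite Z0 in Hq.
      replace (S2 - 2 * ((S2 + 1) / (2 * S1)) * S1 + ((S2 + 1) / (2 * S1)) ^ 2 * 0) with (-1) in Hq by (field; auto). lra. }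
    rewrite H, Z0. lra.
  - specialize (Hq (S1 / S0)).
    replace (S2 - 2 * (S1 / S0) * S1 + (S1 / S0) ^ 2 * S0) with ((S0 * S2 - S1^2)/S0) in Hq by (field; auto).
    assert (0 <= S0 * S2 - S1^2).
    { apply Rmult_le_reg_r with (/ S0). apply Rinv_0_lt_compat; lra. rewrite Rmult_0_l. exact Hq. }
    lra.
Qed.

Lemma sa1 a : sin_approx a 1 = a - a^3/6.
Proof. unfold sin_approx, sin_term. simpl. unfold INR. simpl. field. Qed.
Lemma sa2 a : sin_approx a 2 = a - a^3/6 + a^5/120.
Proof. unfold sin_approx, sin_term. simpl. unfold INR. simpl. field. Qed.

Lemma sin_pos_le x : 0 <= x -> Rabs (sin x) <= x.
Proof. intros Hx. destruct (Rle_lt_dec x 4) as [H4|H4].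
 - destruct (pre_sin_bound x 0 Hx H4) as [H1 H2]. simpl in H1, H2.
   rewrite sa1 in H1. rewrite sa2 in H2. apply Rabs_le. split.
   + destruct (Rle_lt_dec (x^2) 12). assert (0 <= x^3) by (apply pow_le; lra).
     replace (x^3) with (x * x^2) in H1 by ring. nra. assert (1 <= x) by nra. pose proof (SIN_bound x). lra.
   + assert (0 <= x^3) by (apply pow_le; lra).
     assert (x^5/120 <= x^3/6). { replace (x^5) with (x^3 * x^2) by ring. assert (x^3 * x^2 <= x^3 * 20) by (apply Rmult_le_compat_l; nra). lra. }
     pose proof (SIN_bound x). lra.
 - pose proof (SIN_bound x). apply Rabs_le. lra. Qed.
Lemma sin_abs_le x : Rabs (sin x) <= Rabs x.
Proof. destruct (Rle_lt_dec 0 x). rewrite (Rabs_right x) by lra. apply sin_pos_le; auto.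
 rewrite <- (Rabs_Ropp x), <- Rabs_Ropp, <- sin_neg. rewrite (Rabs_right (-x)) by lra. apply sin_pos_le; lra. Qed.
Lemma sin_lower u : 0 <= u <= 1 -> 5/6 * u <= sin u.
Proof. intros H. destruct (pre_sin_bound u 0) as [H1 _]; try lra. simpl in H1. rewrite sa1 in H1. nra. Qed.

Lemma cexpi_add a b : Cmult (cexpi a) (cexpi b) = cexpi (a + b).
Proof. unfold cexpi, Cmult. simpl. rewrite cos_plus, sin_plus. apply injective_projections; simpl; ring. Qed.
Lemma cexpi_conj a : Cconj (cexpi a) = cexpi (- a).
Proof. unfold cexpi, Cconj. simpl. rewrite cos_neg, sin_neg. auto. Qed.
Lemma Cmod_cexpi a : Cmod (cexpi a) = 1.
Proof. unfold Cmod, cexpi. simpl. transitivity (sqrt 1). f_equal. pose proof (sin2_cos2 a). unfold Rsqr in H. ring_simplify. lra. apply sqrt_1. Qed.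
Lemma cexpi_0 : cexpi 0 = RtoC 1.
Proof. unfold cexpi. rewrite cos_0, sin_0. auto. Qed.

Lemma Cmod2_cexpi_diff a b : (Cmod (Cminus (cexpi a) (cexpi b)))^2 = 4 * sin ((a-b)/2) ^ 2.
Proof. unfold Cmod. rewrite pow2_sqrt by (apply Rplus_le_le_0_compat; apply pow2_ge_0).
 unfold cexpi, Cminus, Cplus, Copp. simpl.
 assert (C2 := cos_2a_sin ((a-b)/2)). replace (2 * ((a-b)/2)) with (a - b) in C2 by field.
 rewrite cos_minus in C2. pose proof (sin2_cos2 a). pose proof (sin2_cos2 b). unfold Rsqr in *. nra. Qed.

Lemma cexpi_lip a b : Cmod (Cminus (cexpi a) (cexpi b)) <= Rabs (a - b).
Proof. apply Rsqr_incr_0_var. 2: apply Rabs_pos. rewrite <- Rsqr_abs. unfold Rsqr.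
 assert (H := Cmod2_cexpi_diff a b).
 set (c := Cmod _) in *. set (s := sin ((a-b)/2)) in *.
 pose proof (sin_abs_le ((a-b)/2)). fold s in H0.
 assert (s ^ 2 <= ((a-b)/2)^2). { rewrite <- (pow2_abs s), <- (pow2_abs ((a-b)/2)). apply pow_incr; split; [apply Rabs_pos|lra]. }
 simpl in *. nra. Qed.

Lemma cos_lower x : Rabs x <= 1/2 -> 7/8 <= cos x.
Proof. intros H. replace x with (2 * (x/2)) by field. rewrite cos_2a_sin.
 pose proof (sin_abs_le (x/2)). pose proof (Rabs_pos (sin (x/2))).
 assert (Rabs (x/2) <= 1/4). { unfold Rdiv. rewrite Rabs_mult, (Rabs_right (/2)) by lra. lra. }
 pose proof (Rsqr_abs (sin (x/2))). unfold Rsqr in *. nra. Qed.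

Definition zr (a : Z) (n : nat) : list Z := map (fun i => (a + Z.of_nat i)%Z) (seq 0 n).

Lemma zr_S a n : zr a (S n) = a :: zr (a+1) n.
Proof. unfold zr. simpl. rewrite <- seq_shift, map_map. f_equal. lia.
 apply map_ext; intros; lia. Qed.
Lemma zr_app n1 : forall a n2, zr a (n1 + n2) = zr a n1 ++ zr (a + Z.of_nat n1) n2.
Proof. induction n1; intros a n2. simpl. rewrite Z.add_0_r. auto.
 change (S n1 + n2)%nat with (S (n1 + n2)). rewrite !zr_S, IHn1. simpl. f_equal. f_equal. f_equal. lia. Qed.
Lemma zr_In a n k : In k (zr a n) <-> (a <= k < a + Z.of_nat n)%Z.
Proof. unfold zr. rewrite in_map_iff. split.
 - intros [x [<- Hx]]. apply in_seq in Hx. lia.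
 - intros H. exists (Z.to_nat (k - a)). split. lia. apply in_seq. lia. Qed.
Lemma zr_shift k a n : map (fun j => (k + j)%Z) (zr a n) = zr (k + a) n.
Proof. unfold zr. rewrite map_map. apply map_ext; intros; lia. Qed.
Lemma zr_length a n : length (zr a n) = n.
Proof. unfold zr. rewrite length_map, length_seq. auto. Qed.

Lemma sR_zr_shift k a n (f : Z -> R) : sR (zr a n) (fun j => f (k + j)%Z) = sR (zr (k + a) n) f.
Proof. rewrite <- zr_shift, sR_map. auto. Qed.

Lemma sR_subrange a n b N (f : Z -> R) : (forall x, 0 <= f x) -> (b <= a)%Z ->
  (a + Z.of_nat n <= b + Z.of_nat N)%Z -> sR (zr a n) f <= sR (zr b N) f.
Proof. intros Hf H1 H2. set (d := Z.to_nat (a - b)). set (r := (N - d - n)%nat).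
 replace N with (d + (n + r))%nat by lia. rewrite zr_app, zr_app, !sR_app.
 replace (b + Z.of_nat d)%Z with a by lia.
 assert (0 <= sR (zr b d) f) by (apply sR_nonneg; auto).
 assert (0 <= sR (zr (a + Z.of_nat n) r) f) by (apply sR_nonneg; auto). lra. Qed.

Lemma dir_tel th n : forall a, Cmult (Cminus (cexpi th) (RtoC 1)) (sC (zr a n) (fun s => cexpi (th * IZR s))) =
  Cminus (cexpi (th * IZR (a + Z.of_nat n))) (cexpi (th * IZR a)).
Proof. induction n; intros a. simpl. rewrite Z.add_0_r. apply injective_projections; simpl; ring.
 rewrite zr_S, sC_cons. rewrite Cmult_plus_distr_l, IHn.
 replace (a + 1 + Z.of_nat n)%Z with (a + Z.of_nat (S n))%Z by lia.
 assert (E : Cmult (cexpi th) (cexpi (th * IZR a)) = cexpi (th * IZR (a+1))).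
 { rewrite cexpi_add, plus_IZR. f_equal. ring. }
 transitivity (Cplus (Cminus (Cmult (cexpi th) (cexpi (th * IZR a))) (cexpi (th * IZR a)))
   (Cminus (cexpi (th * IZR (a + Z.of_nat (S n)))) (cexpi (th * IZR (a + 1))))). ring.
 rewrite E. ring. Qed.

Lemma dir_bound th a n : sin (th/2) ^ 2 * Cmod (sC (zr a n) (fun s => cexpi (th * IZR s))) ^ 2 <= 1.
Proof. set (D := sC _ _).
 assert (H1 := dir_tel th n a). fold D in H1.
 assert (H2 : Cmod (Cmult (Cminus (cexpi th) (RtoC 1)) D) <= 2).
 { rewrite H1. unfold Cminus. eapply Rle_trans. apply Cmod_triangle. rewrite Cmod_opp, !Cmod_cexpi. lra. }
 rewrite Cmod_mult in H2. rewrite <- cexpi_0 in H2.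
 assert (H3 := Cmod2_cexpi_diff th 0). rewrite Rminus_0_r in H3.
 pose proof (Cmod_ge_0 D). pose proof (Cmod_ge_0 (Cminus (cexpi th) (cexpi 0))).
 set (u := Cmod (Cminus _ _)) in *. set (v := Cmod D) in *.
 assert (u * v * (u * v) <= 4) by (apply Rle_trans with (2*2); [apply Rmult_le_compat; nra|lra]).
 set (s := sin (th/2)) in *.
 replace (s^2 * v^2) with ((u^2 * v^2)/4) by (rewrite H3; field). replace (u^2*v^2) with (u * v * (u * v)) by ring. lra. Qed.

Lemma dir_triv th a n : Cmod (sC (zr a n) (fun s => cexpi (th * IZR s))) <= INR n.
Proof. eapply Rle_trans. apply Cmod_sC. erewrite sR_ext. 2:{ intros; apply Cmod_cexpi. }
 rewrite sR_const, zr_length. lra. Qed.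

Lemma re_sC {A} (l : list A) f : Re (sC l f) = sR l (fun a => Re (f a)).
Proof. induction l; simpl; auto. rewrite <- IHl. auto. Qed.

Lemma ind_1 (P : Prop) : P -> Defs.ind P = 1.
Proof. intros H. unfold Defs.ind. destruct (excluded_middle_informative P); tauto. Qed.
Lemma ind_0 (P : Prop) : ~ P -> Defs.ind P = 0.
Proof. intros H. unfold Defs.ind. destruct (excluded_middle_informative P); tauto. Qed.
Lemma ind_01 (P : Prop) : 0 <= Defs.ind P <= 1.
Proof. unfold Defs.ind. destruct (excluded_middle_informative P); lra. Qed.
Lemma ind_and (P Q : Prop) : Defs.ind (P /\ Q) = Defs.ind P * Defs.ind Q.
Proof. unfold Defs.ind. destruct (excluded_middle_informative P), (excluded_middle_informative Q),
  (excluded_middle_informative (P /\ Q)); try tauto; lra. Qed.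
Lemma ind_mono (P Q : Prop) : (P -> Q) -> Defs.ind P <= Defs.ind Q.
Proof. unfold Defs.ind. destruct (excluded_middle_informative P), (excluded_middle_informative Q); try tauto; lra. Qed.

Definition rnd (y : R) : Z := up (y - /2).
Lemma rnd_spec y : Rabs (y - IZR (rnd y)) <= 1/2.
Proof. unfold rnd. destruct (archimed (y - /2)) as [H1 H2]. apply Rabs_le. lra. Qed.

Lemma Cmod_sq_conj c : RtoC (Cmod c ^ 2) = Cmult c (Cconj c).
Proof. rewrite Cmod2_conj. auto. Qed.

Lemma tt {A L} (l : list L) (mu : list A) (x : A -> C) (F : A -> L -> C) :
  sR l (fun i => Cmod (sC mu (fun a => Cmult (x a) (F a i))) ^ 2) <=
  sR mu (fun a => sR mu (fun a' => Cmod (x a) * Cmod (x a') *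
     Cmod (sC l (fun i => Cmult (F a i) (Cconj (F a' i)))))).
Proof.
  set (X := sR l _).
  assert (HX : 0 <= X) by (apply sR_nonneg; intros; apply pow2_ge_0).
  assert (E : RtoC X = sC mu (fun a => sC mu (fun a' => Cmult (Cmult (x a) (Cconj (x a')))
                  (sC l (fun i => Cmult (F a i) (Cconj (F a' i))))))).
  { unfold X. rewrite sC_RtoC.
    rewrite (sC_ext l _ (fun i => sC mu (fun a => sC mu (fun a' => Cmult (Cmult (x a) (Cconj (x a'))) (Cmult (F a i) (Cconj (F a' i))))))).
    2:{ intros i _. rewrite Cmod_sq_conj, sC_conj, sC_mult. apply sC_ext; intros a _.
        apply sC_ext; intros a' _. rewrite Cmult_conj. ring. }
    rewrite sC_swap. apply sC_ext; intros a _. rewrite sC_swap. apply sC_ext; intros a' _.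
    rewrite sC_scal. auto. }
  replace X with (Cmod (RtoC X)) by (rewrite Cmod_R; apply Rabs_right; lra).
  rewrite E. eapply Rle_trans. apply Cmod_sC. apply sR_le; intros a _.
  eapply Rle_trans. apply Cmod_sC. apply sR_le; intros a' _.
  rewrite !Cmod_mult, Cmod_conj. lra. Qed.

Lemma loc1 (m K : nat) (k : Z) (F : Z -> R) : (forall p, 0 <= F p) ->
  (- Z.of_nat K <= k - Z.of_nat m)%Z -> (k + Z.of_nat m <= Z.of_nat K)%Z ->
  sR (zr (- Z.of_nat m) (2*m+1)) (fun j => F (k + j)%Z) <=
  sR (zr (- Z.of_nat K) (2*K+1)) (fun p => Defs.ind (k - Z.of_nat m <= p <= k + Z.of_nat m)%Z * F p).
Proof. intros HF H1 H2. rewrite sR_zr_shift.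
  rewrite (sR_ext _ F (fun p => Defs.ind (k - Z.of_nat m <= p <= k + Z.of_nat m)%Z * F p)).
  2:{ intros p Hp. apply zr_In in Hp. rewrite ind_1 by lia. ring. }
  apply sR_subrange. intros p. pose proof (ind_01 (k - Z.of_nat m <= p <= k + Z.of_nat m)%Z).
  specialize (HF p). nra. lia. lia. Qed.

Lemma shift1 (K : nat) (t : Z) (h : Z -> R) : (forall p, 0 <= h p) -> (0 <= t <= Z.of_nat K)%Z ->
  sR (zr (- Z.of_nat K) (2*K+1)) h <= sR (zr (- Z.of_nat K) (3*K+1)) (fun s => h (s - t)%Z).
Proof. intros Hh Ht.
  transitivity (sR (zr (t + - Z.of_nat K) (2*K+1)) (fun s => h (s-t)%Z)).
  rewrite <- sR_zr_shift. apply Req_le, sR_ext; intros; f_equal; lia.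
  apply sR_subrange; auto; lia. Qed.

Lemma zr_1 a : zr a 1 = (a :: nil).
Proof. unfold zr. simpl. f_equal. lia. Qed.
Lemma sumV_aux (A : nat) : sR (zr (- Z.of_nat A) (2*A+1)) (fun a => / (IZR a ^ 2 + 1)) <= 5 - 4 / (INR A + 1).
Proof. induction A.
  - simpl. replace (IZR (0 + 0)) with 0 by (simpl; auto). simpl. lra.
  - replace (2 * S A + 1)%nat with (1 + ((2 * A + 1) + 1))%nat by lia.
    rewrite zr_app, zr_app, !sR_app. rewrite !zr_1, !sR_cons, !sR_nil.
    replace (- Z.of_nat (S A) + Z.of_nat 1)%Z with (- Z.of_nat A)%Z by lia.
    replace (- Z.of_nat A + Z.of_nat (2 * A + 1))%Z with (Z.of_nat A + 1)%Z by lia.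
    replace (- Z.of_nat (S A) + Z.of_nat 0)%Z with (- (Z.of_nat A + 1))%Z by lia.
    rewrite opp_IZR, plus_IZR, <- INR_IZR_INZ, S_INR.
    replace ((- (INR A + 1)) ^ 2) with ((INR A + 1)^2) by ring.
    pose proof (pos_INR A).
    assert (/ ((INR A + 1) ^ 2 + 1) <= 2 / (INR A + 1) - 2 / (INR A + 1 + 1)).
    { apply Rmult_le_reg_r with (((INR A + 1) ^ 2 + 1) * (INR A + 1) * (INR A + 1 + 1)).
      apply Rmult_lt_0_compat. apply Rmult_lt_0_compat. nra. lra. lra.
      field_simplify; try lra. nra. nra. }
    rewrite <- INR_IZR_INZ. unfold Rdiv in *. lra.
Qed.
Lemma sumV (A : nat) : sR (zr (- Z.of_nat A) (2*A+1)) (fun a => 2 / (IZR a ^ 2 + 1)) <= 10.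
Proof. unfold Rdiv. rewrite sR_scal. pose proof (sumV_aux A). pose proof (pos_INR A).
  assert (0 <= / (INR A + 1)) by (apply Rlt_le, Rinv_0_lt_compat; lra).
  unfold Rdiv in *. lra. Qed.

Lemma abs_le_inv x a : Rabs x <= a -> -a <= x <= a.
Proof. unfold Rabs. destruct (Rcase_abs x); lra. Qed.

Lemma up_ge1 R : 1 <= R -> (1 <= up R)%Z /\ IZR (up R) > R /\ IZR (up R) <= R + 1.
Proof. intros H. destruct (archimed R) as [H1 H2]. split. apply le_IZR. apply Rlt_le. simpl. lra. lra. Qed.

Lemma cover1 (R B f x x' : R) : 1 <= R -> 0 <= f -> f <= B -> f * (R * (x - x'))^2 <= B -> Rabs (x - x') <= 2 ->
  f <= B * sR (zr (- Z.of_nat (Z.to_nat (up R))) (2 * Z.to_nat (up R) + 1))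
          (fun a => Defs.ind (Bint (x + 2 * IZR a / R) (/ R) x') * (2 / (IZR a ^ 2 + 1))).
Proof.
  intros HR Hf HfB HfB2 Hd.
  set (al := rnd (R * (x' - x) / 2)).
  assert (Hal := rnd_spec (R * (x' - x) / 2)). fold al in Hal. apply abs_le_inv in Hal.
  apply abs_le_inv in Hd.
  destruct (up_ge1 R HR) as [U1 [U2 U3]].
  assert (HB : 0 <= B) by lra.
  assert (Hbox : Bint (x + 2 * IZR al / R) (/ R) x').
  { unfold Bint. assert (0 < R) by lra.
    assert (E1 : x + 2 * IZR al / R - / R = x + (2 * IZR al - 1) / R) by (field; lra).
    assert (E2 : x + 2 * IZR al / R + / R = x + (2 * IZR al + 1) / R) by (field; lra).
    rewrite E1, E2. replace x' with (x + (R*(x'-x))/R) by (field; lra).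
    assert (0 <= / R) by (apply Rlt_le, Rinv_0_lt_compat; lra).
    split; apply Rplus_le_compat_l; unfold Rdiv; apply Rmult_le_compat_r; lra. }
  assert (Hin : In al (zr (- Z.of_nat (Z.to_nat (up R))) (2 * Z.to_nat (up R) + 1))).
  { apply zr_In. rewrite Z2Nat.id by lia.
    assert (IZR al < IZR (up R) + 1) by nra. assert (IZR (- up R) - 1 < IZR al) by (rewrite opp_IZR; nra).
    rewrite <- plus_IZR in H. rewrite <- minus_IZR in H0. apply lt_IZR in H0.
    apply lt_IZR in H. lia. }
  assert (Hk : f * (IZR al ^ 2 + 1) <= 2 * B).
  { destruct (Z.eq_dec al 0) as [E|Hne].
    - rewrite E. simpl. lra.
    - assert (Hs : (1 <= IZR al) \/ (IZR al <= -1)).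
      { destruct (Z_le_gt_dec 1 al). left. apply IZR_le in l. auto. right. apply IZR_le. lia. }
      assert (H1 : 1 <= IZR al ^ 2) by (destruct Hs; nra).
      assert (H2 : IZR al ^ 2 <= (R * (x - x')) ^ 2).
      { replace ((R * (x - x')) ^ 2) with ((R * (x' - x))^2) by ring.
        destruct Hs. assert (IZR al <= R * (x' - x)) by lra. nra.
        assert (R * (x' - x) <= IZR al) by lra. nra. }
      assert (f * IZR al ^ 2 <= f * (R * (x - x')) ^ 2) by (apply Rmult_le_compat_l; lra).
      lra. }
  assert (Hp : 0 < IZR al ^ 2 + 1) by (pose proof (pow2_ge_0 (IZR al)); lra).
  eapply Rle_trans. 2:{ apply Rmult_le_compat_l. exact HB. apply (sR_In_le _ _ al).
    intros a _. apply Rmult_le_pos. apply ind_01. apply Rlt_le. unfold Rdiv. apply Rmult_lt_0_compat. lra.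
    apply Rinv_0_lt_compat. pose proof (pow2_ge_0 (IZR a)). lra. exact Hin. }
  cbv beta. rewrite ind_1 by exact Hbox. rewrite Rmult_1_l.
  apply Rmult_le_reg_r with (IZR al ^ 2 + 1). exact Hp.
  replace (B * (2 / (IZR al ^ 2 + 1)) * (IZR al ^ 2 + 1)) with (2 * B) by (field; lra). lra.
Qed.

Definition nnR (m : nat) : R := 2 * INR m + 1.
Definition e1 (m : nat) (x : R) (k : Z) : C := cexpi (x / nnR m * IZR k).
Definition Jm (m : nat) := zr (- Z.of_nat m) (2*m+1).
Definition c0 m x := sC (Jm m) (fun j => e1 m x j).
Definition EE m (z : R*R) (p : Z*Z) := Cmult (e1 m (fst z) (fst p)) (e1 m (snd z) (snd p)).
Definition xx m (a : (R*R)*R) : C := Cdiv (RtoC (mass a)) (Cmult (c0 m (fst (pt a))) (c0 m (snd (pt a)))).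
Definition gg m (mu : fmeasure) (p : Z*Z) : C := sC mu (fun a => Cmult (xx m a) (EE m (pt a) p)).
Definition kk m R1 R2 (b : (R*R)*R) : Z*Z := (rnd (nnR m * R1 * fst (pt b)), rnd (nnR m * R2 * snd (pt b))).

Lemma nnR_ge1 m : 1 <= nnR m.
Proof. unfold nnR. pose proof (pos_INR m). lra. Qed.

Lemma e1_add m x k j : Cmult (e1 m x k) (e1 m x j) = e1 m x (k + j).
Proof. unfold e1. rewrite cexpi_add, plus_IZR. f_equal. ring. Qed.

Lemma c0_id m x k : Cmult (e1 m x k) (c0 m x) = sC (Jm m) (fun j => e1 m x (k + j)).
Proof. unfold c0. rewrite <- sC_scal. apply sC_ext; intros. apply e1_add. Qed.

Lemma Jm_bound m j : In j (Jm m) -> Rabs (IZR j) <= INR m.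
Proof. unfold Jm. intros H. apply zr_In in H. rewrite INR_IZR_INZ. apply Rabs_le.
  split. rewrite <- opp_IZR. apply IZR_le. lia. apply IZR_le. lia. Qed.

Lemma c0_lower m x : Rabs x <= 1 -> nnR m * (7/8) <= Cmod (c0 m x).
Proof. intros Hx. eapply Rle_trans. 2: apply re_le_Cmod. eapply Rle_trans. 2: apply Rle_abs.
  unfold c0. rewrite re_sC.
  eapply Rle_trans. 2:{ apply sR_le. intros j Hj. unfold e1, cexpi. simpl.
    apply cos_lower. pose proof (Jm_bound m j Hj). pose proof (nnR_ge1 m).
    unfold Rdiv. rewrite !Rabs_mult, Rabs_inv, (Rabs_right (nnR m)) by lra.
    apply Rle_trans with (1 * / nnR m * INR m).
    apply Rmult_le_compat. apply Rmult_le_pos. apply Rabs_pos. apply Rlt_le, Rinv_0_lt_compat; lra.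
    apply Rabs_pos. apply Rmult_le_compat_r. apply Rlt_le, Rinv_0_lt_compat; lra. auto. auto.
    unfold nnR. apply Rmult_le_reg_r with (2 * INR m + 1). pose proof (pos_INR m). lra.
    field_simplify. pose proof (pos_INR m). lra. pose proof (pos_INR m). lra. }
  rewrite sR_const. unfold Jm. rewrite zr_length. unfold nnR. rewrite plus_INR, mult_INR. simpl. lra. Qed.

Lemma c0_nz m x : Rabs x <= 1 -> c0 m x <> RtoC 0.
Proof. intros H E. pose proof (c0_lower m x H). rewrite E, Cmod_0 in H0. pose proof (nnR_ge1 m). lra. Qed.

Lemma EE_split m z k : Cmult (EE m z k) (Cmult (c0 m (fst z)) (c0 m (snd z))) =
  sC (Jm m) (fun j1 => sC (Jm m) (fun j2 => EE m z (fst k + j1, snd k + j2)%Z)).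
Proof. unfold EE. transitivity (Cmult (Cmult (e1 m (fst z) (fst k)) (c0 m (fst z))) (Cmult (e1 m (snd z) (snd k)) (c0 m (snd z)))).
  ring. rewrite !c0_id, sC_mult. auto. Qed.

Lemma sC_minus {A} (l : list A) f g : Cminus (sC l f) (sC l g) = sC l (fun a => Cminus (f a) (g a)).
Proof. induction l; simpl. apply injective_projections; simpl; lra. rewrite <- IHl. ring. Qed.

Lemma approx_term m R1 R2 (z w : R*R) : Rabs (fst z) <= 1 -> Rabs (snd z) <= 1 ->
  Cmod (Cminus (cexpi (R1 * fst z * fst w + R2 * snd z * snd w))
     (EE m z (rnd (nnR m * R1 * fst w), rnd (nnR m * R2 * snd w)))) <= 1 / nnR m.
Proof. intros Hz1 Hz2. unfold EE, e1. simpl. rewrite cexpi_add.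
  eapply Rle_trans. apply cexpi_lip. pose proof (nnR_ge1 m). set (n := nnR m) in *.
  pose proof (rnd_spec (n * R1 * fst w)). pose proof (rnd_spec (n * R2 * snd w)).
  set (k1 := rnd (n * R1 * fst w)) in *. set (k2 := rnd (n * R2 * snd w)) in *.
  replace (R1 * fst z * fst w + R2 * snd z * snd w - (fst z / n * IZR k1 + snd z / n * IZR k2))
    with (fst z / n * (n * R1 * fst w - IZR k1) + snd z / n * (n * R2 * snd w - IZR k2)) by (field; lra).
  eapply Rle_trans. apply Rabs_triang. rewrite !Rabs_mult.
  assert (Hi : Rabs (/ n) = / n) by (apply Rabs_right; apply Rle_ge, Rlt_le, Rinv_0_lt_compat; lra).
  unfold Rdiv. rewrite !Rabs_mult, Hi.
  assert (0 < / n) by (apply Rinv_0_lt_compat; lra).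
  pose proof (Rabs_pos (fst z)). pose proof (Rabs_pos (snd z)).
  pose proof (Rabs_pos (n * R1 * fst w - IZR k1)). pose proof (Rabs_pos (n * R2 * snd w - IZR k2)).
  assert (Rabs (fst z) * / n * Rabs (n * R1 * fst w - IZR k1) <= 1 * / n * (1/2)).
  { apply Rmult_le_compat; try nra. }
  assert (Rabs (snd z) * / n * Rabs (n * R2 * snd w - IZR k2) <= 1 * / n * (1/2)).
  { apply Rmult_le_compat; try nra. }
  lra. Qed.

Definition Sq m R1 R2 (mu nu : fmeasure) : C :=
  sC mu (fun a => sC nu (fun b => Cmult (EE m (pt a) (kk m R1 R2 b)) (RtoC (mass a * mass b)))).

Lemma stepA m R1 R2 mu nu : valid_measure mu -> valid_measure nu ->
  Cmod (Cminus (osc_sum R1 R2 mu nu) (Sq m R1 R2 mu nu)) <= total_mass mu * total_mass nu / nnR m.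
Proof. intros Vm Vn. change (osc_sum R1 R2 mu nu) with
   (sC mu (fun a => sC nu (fun b => Cmult (cexpi (R1 * fst (pt a) * fst (pt b) + R2 * snd (pt a) * snd (pt b))) (RtoC (mass a * mass b))))).
  unfold Sq. rewrite sC_minus. eapply Rle_trans. apply Cmod_sC.
  change (total_mass mu) with (sR mu mass). change (total_mass nu) with (sR nu mass).
  unfold Rdiv. rewrite sR_mult, Rmult_comm, <- sR_scal. apply sR_le; intros a Ha.
  rewrite sC_minus. eapply Rle_trans. apply Cmod_sC. rewrite <- sR_scal. apply sR_le; intros b Hb.
  destruct (Vm a Ha) as [Ma [Za1 Za2]]. destruct (Vn b Hb) as [Mb _].
  replace (Cminus (Cmult (cexpi (R1 * fst (pt a) * fst (pt b) + R2 * snd (pt a) * snd (pt b))) (RtoC (mass a * mass b)))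
     (Cmult (EE m (pt a) (kk m R1 R2 b)) (RtoC (mass a * mass b))))
   with (Cmult (Cminus (cexpi (R1 * fst (pt a) * fst (pt b) + R2 * snd (pt a) * snd (pt b))) (EE m (pt a) (kk m R1 R2 b))) (RtoC (mass a * mass b))) by ring.
  rewrite Cmod_mult, Cmod_R, Rabs_right by (apply Rle_ge, Rmult_le_pos; auto).
  unfold kk. pose proof (approx_term m R1 R2 (pt a) (pt b)).
  assert (Cmod (Cminus (cexpi (R1 * fst (pt a) * fst (pt b) + R2 * snd (pt a) * snd (pt b)))
      (EE m (pt a) (rnd (nnR m * R1 * fst (pt b)), rnd (nnR m * R2 * snd (pt b))))) <= / nnR m).
  { unfold Rdiv in H. rewrite Rmult_1_l in H. apply H; apply Rabs_le; lra. }
  assert (0 <= mass a * mass b) by (apply Rmult_le_pos; auto).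
  apply Rle_trans with (/ nnR m * (mass a * mass b)). apply Rmult_le_compat_r; auto. lra. Qed.

Lemma valid_in mu a : valid_measure mu -> In a mu -> 0 <= mass a /\ Rabs (fst (pt a)) <= 1 /\ Rabs (snd (pt a)) <= 1.
Proof. intros V H. destruct (V a H) as [H1 [H2 H3]]. split; auto. split; apply Rabs_le; lra. Qed.

Lemma stepB m R1 R2 mu nu : valid_measure mu ->
  Sq m R1 R2 mu nu = sC nu (fun b => Cmult (RtoC (mass b)) (sC (Jm m) (fun j1 => sC (Jm m)
     (fun j2 => gg m mu (fst (kk m R1 R2 b) + j1, snd (kk m R1 R2 b) + j2)%Z)))).
Proof. intros Vm. unfold Sq. rewrite sC_swap. apply sC_ext; intros b Hb.
  set (k := kk m R1 R2 b).
  transitivity (Cmult (RtoC (mass b)) (sC mu (fun a => Cmult (xx m a)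
     (sC (Jm m) (fun j1 => sC (Jm m) (fun j2 => EE m (pt a) (fst k + j1, snd k + j2)%Z)))))).
  - rewrite <- sC_scal. apply sC_ext; intros a Ha. rewrite <- EE_split. unfold xx.
    destruct (valid_in mu a Vm Ha) as [_ [H1 H2]].
    pose proof (c0_nz m _ H1). pose proof (c0_nz m _ H2).
    rewrite RtoC_mult. field. split; auto.
  - f_equal. unfold gg.
    rewrite (sC_ext mu _ (fun a => sC (Jm m) (fun j1 => sC (Jm m) (fun j2 => Cmult (xx m a) (EE m (pt a) (fst k + j1, snd k + j2)%Z))))).
    2:{ intros a _. rewrite <- sC_scal. apply sC_ext; intros. rewrite <- sC_scal. auto. }
    rewrite sC_swap. apply sC_ext; intros j1 _. rewrite sC_swap. auto. Qed.

Lemma Jm_len m : sR (Jm m) (fun _ => 1) = nnR m.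
Proof. rewrite sR_const. unfold Jm. rewrite zr_length, plus_INR, mult_INR. unfold nnR. simpl. ring. Qed.

Lemma CS_J m (G : Z -> R) : (sR (Jm m) G)^2 <= nnR m * sR (Jm m) (fun j => G j ^ 2).
Proof. pose proof (CS (Jm m) (fun _ => 1) G). simpl in H.
  rewrite (sR_ext _ (fun x => 1 * G x) G) in H by (intros; ring).
  rewrite (sR_ext _ (fun x => 1 * (G x * (G x * 1))) (fun j => G j ^ 2)) in H by (intros; simpl; ring).
  rewrite Jm_len in H. simpl. apply H. intros; lra. Qed.

Lemma stepC m R1 R2 mu nu : valid_measure mu -> valid_measure nu ->
  Cmod (Sq m R1 R2 mu nu) ^ 2 <= total_mass nu * (nnR m ^ 2 * sR nu (fun b => mass b *
     sR (Jm m) (fun j1 => sR (Jm m) (fun j2 => Cmod (gg m mu (fst (kk m R1 R2 b) + j1, snd (kk m R1 R2 b) + j2)%Z) ^ 2)))).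
Proof. intros Vm Vn. rewrite stepB by auto.
  set (H := fun b => sR (Jm m) (fun j1 => sR (Jm m) (fun j2 => Cmod (gg m mu (fst (kk m R1 R2 b) + j1, snd (kk m R1 R2 b) + j2)%Z)))).
  assert (H1 : Cmod (sC nu (fun b => Cmult (RtoC (mass b)) (sC (Jm m) (fun j1 => sC (Jm m)
     (fun j2 => gg m mu (fst (kk m R1 R2 b) + j1, snd (kk m R1 R2 b) + j2)%Z))))) <= sR nu (fun b => mass b * H b)).
  { eapply Rle_trans. apply Cmod_sC. apply sR_le; intros b Hb. rewrite Cmod_mult, Cmod_R.
    destruct (valid_in nu b Vn Hb) as [Mb _]. rewrite Rabs_right by lra.
    apply Rmult_le_compat_l; auto. unfold H. eapply Rle_trans. apply Cmod_sC. apply sR_le; intros. apply Cmod_sC. }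
  assert (H2 : 0 <= sR nu (fun b => mass b * H b)).
  { apply sR_nonneg; intros b Hb. destruct (valid_in nu b Vn Hb) as [Mb _]. apply Rmult_le_pos; auto.
    unfold H. apply sR_nonneg; intros; apply sR_nonneg; intros; apply Cmod_ge_0. }
  eapply Rle_trans. apply pow_incr. split. apply Cmod_ge_0. exact H1.
  eapply Rle_trans. apply CS. intros b Hb. apply (valid_in nu b Vn Hb).
  change (sR nu mass) with (total_mass nu).
  assert (0 <= total_mass nu) by (apply sR_nonneg; intros b Hb; apply (valid_in nu b Vn Hb)).
  apply Rmult_le_compat_l; auto. rewrite <- sR_scal. apply sR_le; intros b Hb.
  destruct (valid_in nu b Vn Hb) as [Mb _].
  replace (nnR m ^ 2 * (mass b * sR (Jm m) (fun j1 => sR (Jm m) (fun j2 => Cmod (gg m mu (fst (kk m R1 R2 b) + j1, snd (kk m R1 R2 b) + j2)%Z) ^ 2))))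
   with (mass b * (nnR m ^ 2 * sR (Jm m) (fun j1 => sR (Jm m) (fun j2 => Cmod (gg m mu (fst (kk m R1 R2 b) + j1, snd (kk m R1 R2 b) + j2)%Z) ^ 2)))) by ring.
  apply Rmult_le_compat_l; auto. unfold H.
  eapply Rle_trans. apply CS_J. pose proof (nnR_ge1 m).
  replace (nnR m ^ 2) with (nnR m * nnR m) by ring. rewrite Rmult_assoc.
  apply Rmult_le_compat_l. lra. rewrite <- sR_scal. apply sR_le; intros j1 _. apply CS_J. Qed.

Definition Kn m R := Z.to_nat (up (nnR m * (R + 1))).
Definition Pn K := zr (- Z.of_nat K) (2*K+1).

Lemma Kn_spec m R : 1 <= R -> nnR m * (R + 1) < INR (Kn m R) <= nnR m * (R + 1) + 1 /\ IZR (Z.of_nat (Kn m R)) = INR (Kn m R).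
Proof. intros HR. pose proof (nnR_ge1 m). destruct (archimed (nnR m * (R + 1))) as [H1 H2].
  assert (0 <= up (nnR m * (R + 1)))%Z. { apply le_IZR. simpl. nra. }
  unfold Kn. rewrite INR_IZR_INZ, Z2Nat.id by lia. split. lra. auto. Qed.

Lemma INR_m m : INR m = (nnR m - 1) / 2.
Proof. unfold nnR. field. Qed.

Lemma kb_range m R w : 1 <= R -> Rabs w <= 1 ->
  (- Z.of_nat (Kn m R) <= rnd (nnR m * R * w) - Z.of_nat m)%Z /\ (rnd (nnR m * R * w) + Z.of_nat m <= Z.of_nat (Kn m R))%Z.
Proof. intros HR Hw. destruct (Kn_spec m R HR) as [[K1 K2] K3]. pose proof (nnR_ge1 m).
  pose proof (rnd_spec (nnR m * R * w)). apply abs_le_inv in H0. apply abs_le_inv in Hw.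
  assert (-(nnR m * R) <= nnR m * R * w <= nnR m * R).
  { split. replace (-(nnR m * R)) with (nnR m * R * (-1)) by ring. apply Rmult_le_compat_l; nra.
    replace (nnR m * R) with (nnR m * R * 1) at 2 by ring. apply Rmult_le_compat_l; nra. }
  pose proof (INR_m m). rewrite INR_IZR_INZ in H2.
  split; apply le_IZR; rewrite ?minus_IZR, ?plus_IZR, ?opp_IZR, K3; rewrite <- ?INR_IZR_INZ in *; nra. Qed.

Lemma kb_box m R w p : 1 <= R -> (rnd (nnR m * R * w) - Z.of_nat m <= p <= rnd (nnR m * R * w) + Z.of_nat m)%Z ->
  Bint (IZR p / (nnR m * R)) (/ R) w.
Proof. intros HR Hp. pose proof (nnR_ge1 m).
  pose proof (rnd_spec (nnR m * R * w)). set (k := rnd (nnR m * R * w)) in *.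
  assert (Hk : Rabs (IZR k - IZR p) <= INR m).
  { rewrite INR_IZR_INZ. apply Rabs_le. rewrite <- minus_IZR, <- opp_IZR. split; apply IZR_le; lia. }
  assert (Rabs (nnR m * R * w - IZR p) <= nnR m / 2).
  { replace (nnR m * R * w - IZR p) with ((nnR m * R * w - IZR k) + (IZR k - IZR p)) by ring.
    eapply Rle_trans. apply Rabs_triang. rewrite INR_m in Hk. lra. }
  assert (E : w - IZR p / (nnR m * R) = (nnR m * R * w - IZR p) / (nnR m * R)) by (field; lra).
  assert (Rabs (w - IZR p / (nnR m * R)) <= / R).
  { rewrite E. unfold Rdiv. rewrite Rabs_mult, Rabs_inv, (Rabs_right (nnR m * R)) by nra.
    apply Rle_trans with (nnR m / 2 * / (nnR m * R)). apply Rmult_le_compat_r.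
    apply Rlt_le, Rinv_0_lt_compat; nra. auto.
    replace (nnR m / 2 * / (nnR m * R)) with (/R * / 2) by (field; lra).
    assert (0 < / R) by (apply Rinv_0_lt_compat; lra). lra. }
  apply abs_le_inv in H2. unfold Bint. lra. Qed.

Lemma stepD m R1 R2 (nu : fmeasure) Mnu (H : Z*Z -> R) : 1 <= R1 -> 1 <= R2 -> valid_measure nu ->
  (forall xi1 xi2, box_mass nu R1 R2 xi1 xi2 <= Mnu) -> (forall p, 0 <= H p) ->
  sR nu (fun b => mass b * sR (Jm m) (fun j1 => sR (Jm m) (fun j2 =>
      H (fst (kk m R1 R2 b) + j1, snd (kk m R1 R2 b) + j2)%Z))) <=
  Mnu * sR (Pn (Kn m R1)) (fun p1 => sR (Pn (Kn m R2)) (fun p2 => H (p1, p2))).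
Proof. intros HR1 HR2 Vn HM HH.
  set (I1 := fun b p1 => Defs.ind (fst (kk m R1 R2 b) - Z.of_nat m <= p1 <= fst (kk m R1 R2 b) + Z.of_nat m)%Z).
  set (I2 := fun b p2 => Defs.ind (snd (kk m R1 R2 b) - Z.of_nat m <= p2 <= snd (kk m R1 R2 b) + Z.of_nat m)%Z).
  apply Rle_trans with (sR nu (fun b => sR (Pn (Kn m R1)) (fun p1 => sR (Pn (Kn m R2)) (fun p2 =>
      H (p1,p2) * (mass b * (I1 b p1 * I2 b p2)))))).
  - apply sR_le; intros b Hb. destruct (valid_in nu b Vn Hb) as [Mb [W1 W2]].
    set (k1 := fst (kk m R1 R2 b)). set (k2 := snd (kk m R1 R2 b)).
    destruct (kb_range m R1 (fst (pt b)) HR1 W1) as [r1 r2].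
    destruct (kb_range m R2 (snd (pt b)) HR2 W2) as [r3 r4].
    assert (Hper : sR (Jm m) (fun j1 => sR (Jm m) (fun j2 => H (k1 + j1, k2 + j2)%Z)) <=
        sR (Pn (Kn m R1)) (fun p1 => sR (Pn (Kn m R2)) (fun p2 => H (p1,p2) * (I1 b p1 * I2 b p2)))).
    { apply Rle_trans with (sR (Jm m) (fun j1 => sR (Pn (Kn m R2)) (fun p2 => I2 b p2 * H (k1 + j1, p2)%Z))).
      apply sR_le; intros j1 _. apply (loc1 m (Kn m R2) k2 (fun p2 => H (k1 + j1, p2)%Z)); auto.
      apply Rle_trans with (sR (Pn (Kn m R1)) (fun p1 => I1 b p1 * sR (Pn (Kn m R2)) (fun p2 => I2 b p2 * H (p1, p2)))).
      apply (loc1 m (Kn m R1) k1 (fun p1 => sR (Pn (Kn m R2)) (fun p2 => I2 b p2 * H (p1, p2)))); auto.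
      intros p. apply sR_nonneg; intros. apply Rmult_le_pos. apply ind_01. auto.
      apply Req_le, sR_ext; intros p1 _. rewrite <- sR_scal. apply sR_ext; intros; ring. }
    apply Rle_trans with (mass b * sR (Pn (Kn m R1)) (fun p1 => sR (Pn (Kn m R2)) (fun p2 => H (p1,p2) * (I1 b p1 * I2 b p2)))).
    apply Rmult_le_compat_l; auto.
    rewrite <- sR_scal. apply Req_le, sR_ext; intros. rewrite <- sR_scal. apply sR_ext; intros; ring.
  - rewrite sR_swap. rewrite <- sR_scal. apply sR_le; intros p1 _.
    rewrite sR_swap. rewrite <- sR_scal. apply sR_le; intros p2 _.
    rewrite sR_scal. rewrite (Rmult_comm Mnu). apply Rmult_le_compat_l; auto.
    eapply Rle_trans. 2: apply (HM (IZR p1 / (nnR m * R1)) (IZR p2 / (nnR m * R2))).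
    unfold box_mass, measure_of. change (fold_right ?g 0 nu) with (sR nu (fun a => Defs.ind (Bint (IZR p1 / (nnR m * R1)) (/ R1) (fst (pt a)) /\ Bint (IZR p2 / (nnR m * R2)) (/ R2) (snd (pt a))) * mass a)).
    apply sR_le; intros b Hb. destruct (valid_in nu b Vn Hb) as [Mb _].
    rewrite Rmult_comm. apply Rmult_le_compat_r; auto. unfold I1, I2. rewrite <- ind_and.
    apply ind_mono. intros [C1 C2]. split.
    apply (kb_box m R1 (fst (pt b)) p1 HR1 C1). apply (kb_box m R2 (snd (pt b)) p2 HR2 C2).
Qed.

Definition Sn K := zr (- Z.of_nat K) (3*K+1).
Definition Tn K := zr 0 (K+1).
Definition DS m K y := sC (Sn K) (e1 m y).
Definition DT m K y := sC (Tn K) (e1 m y).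
Definition ff m K y := Cmod (DS m K y) * Cmod (DT m K y) / (INR K + 1).

Lemma sC4 {A B C D} (l1 : list A) (l2 : list B) (l3 : list C) (l4 : list D) f1 f2 f3 f4 :
  sC l1 (fun a => sC l2 (fun b => sC l3 (fun c => sC l4 (fun d => Cmult (Cmult (Cmult (f1 a) (f2 b)) (f3 c)) (f4 d))))) =
  Cmult (Cmult (Cmult (sC l1 f1) (sC l2 f2)) (sC l3 f3)) (sC l4 f4).
Proof. transitivity (sC l1 (fun a => sC l2 (fun b => sC l3 (fun c => Cmult (Cmult (Cmult (f1 a) (f2 b)) (f3 c)) (sC l4 f4))))).
  apply sC_ext; intros. apply sC_ext; intros. apply sC_ext; intros. apply sC_scal.
  transitivity (sC l1 (fun a => sC l2 (fun b => Cmult (Cmult (Cmult (f1 a) (f2 b)) (sC l3 f3)) (sC l4 f4)))).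
  apply sC_ext; intros. apply sC_ext; intros. rewrite sC_scal_r, sC_scal. auto.
  transitivity (sC l1 (fun a => Cmult (Cmult (Cmult (f1 a) (sC l2 f2)) (sC l3 f3)) (sC l4 f4))).
  apply sC_ext; intros. rewrite sC_scal_r, sC_scal_r, sC_scal. auto.
  rewrite sC_scal_r, sC_scal_r, sC_scal_r. auto. Qed.

Lemma EE_conj m z z' s1 s2 t1 t2 :
  Cmult (EE m z ((s1 - t1)%Z, (s2 - t2)%Z)) (Cconj (EE m z' ((s1 - t1)%Z, (s2 - t2)%Z))) =
  Cmult (Cmult (Cmult (Cconj (e1 m (fst z - fst z') t1)) (Cconj (e1 m (snd z - snd z') t2)))
    (e1 m (fst z - fst z') s1)) (e1 m (snd z - snd z') s2).
Proof. unfold EE, e1. simpl. rewrite !Cmult_conj, !cexpi_conj, !cexpi_add. f_equal.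
  rewrite !minus_IZR. unfold Rdiv. ring. Qed.

Lemma sR_avg K (X : R) : sR (Tn K) (fun _ => X) = (INR K + 1) * X.
Proof. rewrite sR_const. unfold Tn. rewrite zr_length, plus_INR. simpl. ring. Qed.

Lemma stepE m K1 K2 (mu : fmeasure) :
  sR (Pn K1) (fun p1 => sR (Pn K2) (fun p2 => Cmod (gg m mu (p1,p2)) ^ 2)) <=
  sR mu (fun a => sR mu (fun a' => Cmod (xx m a) * Cmod (xx m a') *
     (ff m K1 (fst (pt a) - fst (pt a')) * ff m K2 (snd (pt a) - snd (pt a'))))).
Proof.
  set (h := fun p => Cmod (gg m mu p) ^ 2).
  assert (Hh : forall p, 0 <= h p) by (intros; apply pow2_ge_0).
  set (X := sR (Pn K1) (fun p1 => sR (Pn K2) (fun p2 => h (p1,p2)))).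
  change (sR (Pn K1) (fun p1 => sR (Pn K2) (fun p2 => Cmod (gg m mu (p1,p2)) ^ 2))) with X.
  set (Y := sR (Tn K1) (fun t1 => sR (Tn K2) (fun t2 => sR (Sn K1) (fun s1 => sR (Sn K2) (fun s2 => h ((s1 - t1)%Z, (s2 - t2)%Z)))))).
  assert (HXY : (INR K1 + 1) * (INR K2 + 1) * X <= Y).
  { rewrite Rmult_assoc, <- sR_avg. unfold Y. apply sR_le; intros t1 Ht1. rewrite <- sR_avg.
    apply sR_le; intros t2 Ht2. unfold Tn in Ht1, Ht2. apply zr_In in Ht1. apply zr_In in Ht2.
    unfold X, Pn, Sn.
    apply Rle_trans with (sR (zr (- Z.of_nat K1) (2 * K1 + 1)) (fun p1 => sR (zr (- Z.of_nat K2) (3 * K2 + 1)) (fun s2 => h (p1, (s2 - t2)%Z)))).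
    apply sR_le; intros p1 _. apply (shift1 K2 t2 (fun p2 => h (p1, p2))). auto. lia.
    apply (shift1 K1 t1 (fun p1 => sR (zr (- Z.of_nat K2) (3 * K2 + 1)) (fun s2 => h (p1, (s2 - t2)%Z)))).
    intros; apply sR_nonneg; auto. lia. }
  set (L := list_prod (list_prod (Tn K1) (Tn K2)) (list_prod (Sn K1) (Sn K2))).
  set (Fa := fun (a : (R*R)*R) (l : (Z*Z)*(Z*Z)) => EE m (pt a) ((fst (snd l) - fst (fst l))%Z, (snd (snd l) - snd (fst l))%Z)).
  assert (HY : Y = sR L (fun l => Cmod (sC mu (fun a => Cmult (xx m a) (Fa a l))) ^ 2)).
  { unfold L, Y. rewrite sR_prod, sR_prod. apply sR_ext; intros t1 _.
    apply sR_ext; intros t2 _. cbv beta. rewrite sR_prod. auto. }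
  assert (HY2 := tt L mu (xx m) Fa). rewrite <- HY in HY2.
  assert (Hc : forall a a', Cmod (sC L (fun l => Cmult (Fa a l) (Cconj (Fa a' l)))) =
     Cmod (DS m K1 (fst (pt a) - fst (pt a'))) * Cmod (DT m K1 (fst (pt a) - fst (pt a'))) *
     (Cmod (DS m K2 (snd (pt a) - snd (pt a'))) * Cmod (DT m K2 (snd (pt a) - snd (pt a'))))).
  { intros a a'. unfold L. rewrite sC_prod.
    rewrite (sC_ext _ _ (fun tt0 => sC (list_prod (Sn K1) (Sn K2)) (fun ss => Cmult (Cmult (Cmult
       (Cconj (e1 m (fst (pt a) - fst (pt a')) (fst tt0))) (Cconj (e1 m (snd (pt a) - snd (pt a')) (snd tt0))))
       (e1 m (fst (pt a) - fst (pt a')) (fst ss))) (e1 m (snd (pt a) - snd (pt a')) (snd ss))))).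
    2:{ intros [t1 t2] _. apply sC_ext; intros [s1 s2] _. unfold Fa. simpl. apply EE_conj. }
    rewrite sC_prod. rewrite (sC_ext (Tn K1) _ (fun t1 => sC (Tn K2) (fun t2 => sC (Sn K1) (fun s1 => sC (Sn K2) (fun s2 =>
      Cmult (Cmult (Cmult (Cconj (e1 m (fst (pt a) - fst (pt a')) t1)) (Cconj (e1 m (snd (pt a) - snd (pt a')) t2)))
       (e1 m (fst (pt a) - fst (pt a')) s1)) (e1 m (snd (pt a) - snd (pt a')) s2)))))).
    2:{ intros t1 _. apply sC_ext; intros t2 _. simpl. rewrite sC_prod. auto. }
    rewrite sC4, <- !sC_conj, !Cmod_mult, !Cmod_conj. unfold DS, DT. ring. }
  assert (HK : 0 < (INR K1 + 1) * (INR K2 + 1)) by (pose proof (pos_INR K1); pose proof (pos_INR K2); nra).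
  apply Rmult_le_reg_l with ((INR K1 + 1) * (INR K2 + 1)). exact HK.
  eapply Rle_trans. exact HXY. eapply Rle_trans. exact HY2.
  rewrite <- sR_scal. apply Req_le, sR_ext; intros a _. rewrite <- sR_scal. apply sR_ext; intros a' _.
  rewrite Hc. unfold ff. field. split; pose proof (pos_INR K1); pose proof (pos_INR K2); lra. Qed.

Lemma sin2_lower v : Rabs v <= 1 -> 25/36 * v^2 <= sin v ^ 2.
Proof. intros H. apply abs_le_inv in H. destruct (Rle_lt_dec 0 v).
  - pose proof (sin_lower v (conj r (proj2 H))). nra.
  - pose proof (sin_lower (-v) (conj (ltac:(lra) : 0 <= -v) (ltac:(lra) : -v <= 1))).
    rewrite sin_neg in H0. nra. Qed.

Lemma ff_bounds m R y : 1 <= R -> Rabs y <= 2 ->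
  0 <= ff m (Kn m R) y /\ ff m (Kn m R) y <= 10 * nnR m * R /\ ff m (Kn m R) y * (R * y) ^ 2 <= 10 * nnR m * R.
Proof. intros HR Hy. set (K := Kn m R). destruct (Kn_spec m R HR) as [[K1 K2] _]. fold K in K1, K2.
  pose proof (nnR_ge1 m). set (n := nnR m) in *.
  set (a := Cmod (DS m K y)). set (b := Cmod (DT m K y)).
  assert (Ha : 0 <= a) by apply Cmod_ge_0. assert (Hb : 0 <= b) by apply Cmod_ge_0.
  assert (Ha2 : a <= 3 * INR K + 1).
  { unfold a, DS, Sn. eapply Rle_trans. apply dir_triv. rewrite plus_INR, mult_INR. simpl. lra. }
  assert (Hb2 : b <= INR K + 1).
  { unfold b, DT, Tn. eapply Rle_trans. apply dir_triv. rewrite plus_INR. simpl. lra. }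
  set (s2 := sin (y / n / 2) ^ 2).
  assert (Da : s2 * a ^ 2 <= 1) by apply dir_bound.
  assert (Db : s2 * b ^ 2 <= 1) by apply dir_bound.
  assert (Hs0 : 0 <= s2) by apply pow2_ge_0.
  assert (Dab : s2 * (a * b) <= 1).
  { assert ((s2 * (a * b))^2 <= 1) by (replace ((s2 * (a * b))^2) with ((s2 * a^2) * (s2 * b^2)) by ring;
      apply Rle_trans with (1 * 1); [apply Rmult_le_compat; nra | lra]).
    assert (0 <= s2 * (a * b)) by (apply Rmult_le_pos; nra). nra. }
  assert (Hs : y ^ 2 / (6 * n^2) <= s2).
  { unfold s2. assert (Rabs (y / n / 2) <= 1).
    { unfold Rdiv. rewrite !Rabs_mult, Rabs_inv, Rabs_inv, (Rabs_right n), (Rabs_right 2) by lra.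
      apply Rle_trans with (2 * / n * / 2). apply Rmult_le_compat_r. lra. apply Rmult_le_compat_r.
      apply Rlt_le, Rinv_0_lt_compat; lra. lra.
      replace (2 * / n * / 2) with (/ n) by (field; lra). rewrite <- Rinv_1. apply Rinv_le_contravar; lra. }
    pose proof (sin2_lower _ H0). eapply Rle_trans. 2: exact H1.
    replace ((y / n / 2)^2) with (y^2 / n^2 / 4) by (field; lra).
    unfold Rdiv. assert (0 <= y^2 * / n^2). apply Rmult_le_pos. apply pow2_ge_0. apply Rlt_le, Rinv_0_lt_compat. nra.
    replace (y ^ 2 * / (6 * n ^ 2)) with (y^2 * / n^2 * /6) by (field; lra). nra. }
  assert (Hy2 : a * b * y ^ 2 <= 6 * n ^ 2).
  { assert (0 < n^2) by nra.
    apply Rmult_le_reg_r with (/ (6 * n^2)). apply Rinv_0_lt_compat; lra.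
    replace (6 * n ^ 2 * / (6 * n ^ 2)) with 1 by (field; lra).
    apply Rle_trans with (a * b * s2). rewrite Rmult_assoc. apply Rmult_le_compat_l. nra. exact Hs. nra. }
  assert (HK : 0 < INR K + 1) by lra.
  unfold ff. fold a b. fold K. fold n. split; [|split].
  - apply Rmult_le_pos. nra. apply Rlt_le, Rinv_0_lt_compat; lra.
  - apply Rle_trans with (3 * INR K + 1).
    unfold Rdiv. apply Rmult_le_reg_r with (INR K + 1). lra. rewrite Rmult_assoc, Rinv_l by lra.
    rewrite Rmult_1_r. apply Rmult_le_compat; lra. nra.
  - replace (a * b / (INR K + 1) * (R * y) ^ 2) with ((a * b * y^2) * R^2 / (INR K + 1)) by (field; lra).
    apply Rle_trans with (6 * n^2 * R^2 / (INR K + 1)).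
    unfold Rdiv. apply Rmult_le_compat_r. apply Rlt_le, Rinv_0_lt_compat; lra. apply Rmult_le_compat_r. nra. exact Hy2.
    apply Rle_trans with (6 * n^2 * R^2 / (n * R)).
    unfold Rdiv. apply Rmult_le_compat_l. nra. apply Rinv_le_contravar. nra. nra.
    replace (6 * n ^ 2 * R ^ 2 / (n * R)) with (6 * n * R) by (field; lra). nra.
Qed.

Definition Vf (a : Z) : R := 2 / (IZR a ^ 2 + 1).
Definition AL (R : R) := zr (- Z.of_nat (Z.to_nat (up R))) (2 * Z.to_nat (up R) + 1).

Lemma Vf_pos a : 0 <= Vf a.
Proof. unfold Vf. pose proof (pow2_ge_0 (IZR a)). apply Rlt_le. unfold Rdiv. apply Rmult_lt_0_compat. lra.
  apply Rinv_0_lt_compat. lra. Qed.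

Lemma box_nonneg mu R1 R2 x1 x2 : valid_measure mu -> 0 <= box_mass mu R1 R2 x1 x2.
Proof. intros V. unfold box_mass, measure_of.
  change (fold_right ?g 0 mu) with (sR mu (fun a => Defs.ind (Bint x1 (/ R1) (fst (pt a)) /\ Bint x2 (/ R2) (snd (pt a))) * mass a)).
  apply sR_nonneg; intros a Ha. apply Rmult_le_pos. apply ind_01. apply (valid_in mu a V Ha). Qed.

Lemma schur m R1 R2 (mu : fmeasure) Mmu (z : R*R) : 1 <= R1 -> 1 <= R2 -> valid_measure mu ->
  (forall xi1 xi2, box_mass mu R1 R2 xi1 xi2 <= Mmu) -> Rabs (fst z) <= 1 -> Rabs (snd z) <= 1 ->
  sR mu (fun a' => mass a' * (ff m (Kn m R1) (fst z - fst (pt a')) * ff m (Kn m R2) (snd z - snd (pt a'))))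
    <= 10000 * nnR m ^ 2 * R1 * R2 * Mmu.
Proof. intros HR1 HR2 Vm HM Hz1 Hz2.
  assert (HM0 : 0 <= Mmu) by (eapply Rle_trans; [apply (box_nonneg mu R1 R2 0 0 Vm)| apply HM]).
  pose proof (nnR_ge1 m). set (B1 := 10 * nnR m * R1). set (B2 := 10 * nnR m * R2).
  set (I1 := fun a' al => Defs.ind (Bint (fst z + 2 * IZR al / R1) (/ R1) (fst (pt a')))).
  set (I2 := fun a' al => Defs.ind (Bint (snd z + 2 * IZR al / R2) (/ R2) (snd (pt a')))).
  apply Rle_trans with (sR mu (fun a' => B1 * B2 * sR (AL R1) (fun al => sR (AL R2) (fun be =>
      Vf al * Vf be * (mass a' * (I1 a' al * I2 a' be)))))).
  - apply sR_le; intros a' Ha'. destruct (valid_in mu a' Vm Ha') as [Ma [W1 W2]].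
    assert (D1 : Rabs (fst z - fst (pt a')) <= 2).
    { eapply Rle_trans. apply Rabs_triang. rewrite Rabs_Ropp. lra. }
    assert (D2 : Rabs (snd z - snd (pt a')) <= 2).
    { eapply Rle_trans. apply Rabs_triang. rewrite Rabs_Ropp. lra. }
    destruct (ff_bounds m R1 _ HR1 D1) as [F1a [F1b F1c]].
    destruct (ff_bounds m R2 _ HR2 D2) as [F2a [F2b F2c]].
    pose proof (cover1 R1 B1 _ _ _ HR1 F1a F1b F1c D1) as C1.
    pose proof (cover1 R2 B2 _ _ _ HR2 F2a F2b F2c D2) as C2.
    fold (AL R1) in C1. fold (AL R2) in C2.
    set (S1 := sR (AL R1) _) in C1. set (S2 := sR (AL R2) _) in C2.
    apply Rle_trans with (mass a' * ((B1 * S1) * (B2 * S2))).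
    apply Rmult_le_compat_l; auto. apply Rmult_le_compat; auto.
    replace (mass a' * (B1 * S1 * (B2 * S2))) with (B1 * B2 * (S1 * S2 * mass a')) by ring.
    apply Req_le. f_equal. unfold S1, S2. rewrite sR_mult, <- sR_scal_r. apply sR_ext; intros al _.
    rewrite <- sR_scal_r. apply sR_ext; intros be _. unfold I1, I2, Vf. ring.
  - rewrite sR_scal. rewrite sR_swap.
    apply Rle_trans with (B1 * B2 * sR (AL R1) (fun al => sR (AL R2) (fun be => Vf al * Vf be * Mmu))).
    apply Rmult_le_compat_l. unfold B1, B2. apply Rmult_le_pos; apply Rmult_le_pos; try apply Rmult_le_pos; lra.
    apply sR_le; intros al _. rewrite sR_swap. apply sR_le; intros be _.
    rewrite sR_scal. apply Rmult_le_compat_l. pose proof (Vf_pos al); pose proof (Vf_pos be); nra.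
    eapply Rle_trans. 2: apply (HM (fst z + 2 * IZR al / R1) (snd z + 2 * IZR be / R2)).
    unfold box_mass, measure_of.
    change (fold_right ?g 0 mu) with (sR mu (fun a => Defs.ind (Bint (fst z + 2 * IZR al / R1) (/ R1) (fst (pt a)) /\ Bint (snd z + 2 * IZR be / R2) (/ R2) (snd (pt a))) * mass a)).
    apply Req_le, sR_ext; intros a _. unfold I1, I2. rewrite ind_and. ring.
    replace (sR (AL R1) (fun al => sR (AL R2) (fun be => Vf al * Vf be * Mmu))) with (sR (AL R1) Vf * sR (AL R2) Vf * Mmu).
    2:{ rewrite sR_mult, <- sR_scal_r. apply sR_ext; intros. rewrite <- sR_scal_r. apply sR_ext; intros; ring. }
    pose proof (sumV (Z.to_nat (up R1))). pose proof (sumV (Z.to_nat (up R2))).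
    fold (AL R1) in H0. fold (AL R2) in H1. unfold Vf.
    assert (0 <= sR (AL R1) (fun a => 2 / (IZR a ^ 2 + 1))) by (apply sR_nonneg; intros; apply Vf_pos).
    assert (0 <= sR (AL R2) (fun a => 2 / (IZR a ^ 2 + 1))) by (apply sR_nonneg; intros; apply Vf_pos).
    unfold B1, B2.
    replace (10000 * nnR m ^ 2 * R1 * R2 * Mmu) with (10 * nnR m * R1 * (10 * nnR m * R2) * (10 * 10 * Mmu)) by ring.
    apply Rmult_le_compat_l. apply Rmult_le_pos; apply Rmult_le_pos; try apply Rmult_le_pos; lra. apply Rmult_le_compat_r. auto. apply Rmult_le_compat; auto.
Qed.

Lemma xx_bound m a : 0 <= mass a -> Rabs (fst (pt a)) <= 1 -> Rabs (snd (pt a)) <= 1 ->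
  Cmod (xx m a) <= 2 * mass a / nnR m ^ 2.
Proof. intros Ma H1 H2. unfold xx. pose proof (c0_nz m _ H1). pose proof (c0_nz m _ H2).
  rewrite Cmod_div by (apply Cmult_neq_0; auto). rewrite Cmod_mult, Cmod_R, Rabs_right by lra.
  pose proof (c0_lower m _ H1). pose proof (c0_lower m _ H2). pose proof (nnR_ge1 m).
  set (u := Cmod (c0 m (fst (pt a)))) in *. set (v := Cmod (c0 m (snd (pt a)))) in *.
  assert (nnR m ^ 2 / 2 <= u * v).
  { apply Rle_trans with ((nnR m * (7/8)) * (nnR m * (7/8))). nra. apply Rmult_le_compat; nra. }
  unfold Rdiv. apply Rmult_le_reg_r with (u * v * nnR m ^ 2). apply Rmult_lt_0_compat; nra.
  replace (mass a * / (u * v) * (u * v * nnR m ^ 2)) with (mass a * nnR m ^ 2) by (field; nra).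
  replace (2 * mass a * / nnR m ^ 2 * (u * v * nnR m ^ 2)) with (2 * mass a * (u * v)) by (field; nra).
  nra. Qed.

Lemma bound_m R1 R2 mu nu Mmu Mnu m : 1 <= R1 -> 1 <= R2 -> valid_measure mu -> valid_measure nu ->
  (forall xi1 xi2, box_mass mu R1 R2 xi1 xi2 <= Mmu) -> (forall xi1 xi2, box_mass nu R1 R2 xi1 xi2 <= Mnu) ->
  Cmod (osc_sum R1 R2 mu nu) <= 200 * sqrt (R1 * R2 * total_mass mu * total_mass nu * Mmu * Mnu)
      + total_mass mu * total_mass nu / nnR m.
Proof. intros HR1 HR2 Vm Vn HMm HMn.
  assert (HM0 : 0 <= Mmu) by (eapply Rle_trans; [apply (box_nonneg mu R1 R2 0 0 Vm)| apply HMm]).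
  assert (HN0 : 0 <= Mnu) by (eapply Rle_trans; [apply (box_nonneg nu R1 R2 0 0 Vn)| apply HMn]).
  assert (Tm : 0 <= total_mass mu) by (apply sR_nonneg; intros a Ha; apply (valid_in mu a Vm Ha)).
  assert (Tn0 : 0 <= total_mass nu) by (apply sR_nonneg; intros a Ha; apply (valid_in nu a Vn Ha)).
  pose proof (nnR_ge1 m). set (n := nnR m) in *.
  assert (HT : sR (Pn (Kn m R1)) (fun p1 => sR (Pn (Kn m R2)) (fun p2 => Cmod (gg m mu (p1,p2)) ^ 2))
      <= 40000 * R1 * R2 * Mmu * total_mass mu / n ^ 2).
  { eapply Rle_trans. apply stepE.
    apply Rle_trans with (sR mu (fun a => 2 * mass a / n^2 * sR mu (fun a' => 2 * mass a' / n^2 *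
        (ff m (Kn m R1) (fst (pt a) - fst (pt a')) * ff m (Kn m R2) (snd (pt a) - snd (pt a')))))).
    - apply sR_le; intros a Ha. destruct (valid_in mu a Vm Ha) as [Ma [A1 A2]].
      rewrite <- sR_scal. apply sR_le; intros a' Ha'. destruct (valid_in mu a' Vm Ha') as [Ma' [A1' A2']].
      assert (D1 : Rabs (fst (pt a) - fst (pt a')) <= 2).
      { eapply Rle_trans. apply Rabs_triang. rewrite Rabs_Ropp. lra. }
      assert (D2 : Rabs (snd (pt a) - snd (pt a')) <= 2).
      { eapply Rle_trans. apply Rabs_triang. rewrite Rabs_Ropp. lra. }
      destruct (ff_bounds m R1 _ HR1 D1) as [F1 _]. destruct (ff_bounds m R2 _ HR2 D2) as [F2 _].
      pose proof (xx_bound m a Ma A1 A2). pose proof (xx_bound m a' Ma' A1' A2').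
      fold n in H0, H1.
      set (f := ff m (Kn m R1) (fst (pt a) - fst (pt a')) * ff m (Kn m R2) (snd (pt a) - snd (pt a'))).
      assert (0 <= f) by (apply Rmult_le_pos; auto).
      apply Rle_trans with (2 * mass a / n ^ 2 * (2 * mass a' / n ^ 2) * f).
      apply Rmult_le_compat_r. auto. apply Rmult_le_compat; auto using Cmod_ge_0. right; ring.
    - apply Rle_trans with (sR mu (fun a => 2 * mass a / n^2 * (2 / n^2 * (10000 * n ^ 2 * R1 * R2 * Mmu)))).
      + apply sR_le; intros a Ha. destruct (valid_in mu a Vm Ha) as [Ma [A1 A2]].
        apply Rmult_le_compat_l. unfold Rdiv. apply Rmult_le_pos. lra. apply Rlt_le, Rinv_0_lt_compat. nra.
        rewrite (sR_ext _ _ (fun a' => 2 / n^2 * (mass a' * (ff m (Kn m R1) (fst (pt a) - fst (pt a')) * ff m (Kn m R2) (snd (pt a) - snd (pt a')))))) by (intros; unfold Rdiv; ring).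
        rewrite sR_scal. apply Rmult_le_compat_l. unfold Rdiv. apply Rmult_le_pos. lra. apply Rlt_le, Rinv_0_lt_compat. nra.
        apply (schur m R1 R2 mu Mmu (pt a)); auto.
      + rewrite (sR_ext _ _ (fun a => mass a * (2 / n^2 * (2 / n^2 * (10000 * n ^ 2 * R1 * R2 * Mmu))))) by (intros; unfold Rdiv; ring).
        rewrite sR_scal_r. change (sR mu mass) with (total_mass mu). apply Req_le. field. lra. }
  assert (HS : Cmod (Sq m R1 R2 mu nu) ^ 2 <= 40000 * (R1 * R2 * total_mass mu * total_mass nu * Mmu * Mnu)).
  { eapply Rle_trans. apply stepC; auto.
    eapply Rle_trans. apply Rmult_le_compat_l. auto. apply Rmult_le_compat_l. apply pow2_ge_0.
    apply (stepD m R1 R2 nu Mnu (fun p => Cmod (gg m mu p) ^ 2)); auto. intros; apply pow2_ge_0.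
    eapply Rle_trans. apply Rmult_le_compat_l. auto. apply Rmult_le_compat_l. apply pow2_ge_0.
    apply Rmult_le_compat_l. auto. exact HT.
    apply Req_le. fold n. field. lra. }
  assert (HS2 : Cmod (Sq m R1 R2 mu nu) <= 200 * sqrt (R1 * R2 * total_mass mu * total_mass nu * Mmu * Mnu)).
  { rewrite <- (sqrt_pow2 (Cmod _)) by apply Cmod_ge_0.
    replace 200 with (sqrt (200^2)) by (apply sqrt_pow2; lra). rewrite <- sqrt_mult by (try lra; repeat apply Rmult_le_pos; lra).
    apply sqrt_le_1_alt. lra. }
  assert (HA := stepA m R1 R2 mu nu Vm Vn).
  replace (osc_sum R1 R2 mu nu) with (Cplus (Sq m R1 R2 mu nu) (Cminus (osc_sum R1 R2 mu nu) (Sq m R1 R2 mu nu))) by ring.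
  eapply Rle_trans. apply Cmod_triangle. fold n in HA. lra. Qed.

Theorem lemma6p1 :
  exists C0 : R, forall (R1 R2 : R) (mu nu : fmeasure) (Mmu Mnu : R),
    1 <= R1 -> 1 <= R2 ->
    valid_measure mu -> valid_measure nu ->
    is_M mu R1 R2 Mmu -> is_M nu R1 R2 Mnu ->
    Cmod (osc_sum R1 R2 mu nu) <=
      C0 * sqrt (R1 * R2) * sqrt (total_mass mu) * sqrt (total_mass nu)
         * sqrt Mmu * sqrt Mnu.
Proof.
  exists 200. intros R1 R2 mu nu Mmu Mnu HR1 HR2 Vm Vn [HMm _] [HMn _].
  assert (HM0 : 0 <= Mmu) by (eapply Rle_trans; [apply (box_nonneg mu R1 R2 0 0 Vm)| apply HMm]).
  assert (HN0 : 0 <= Mnu) by (eapply Rle_trans; [apply (box_nonneg nu R1 R2 0 0 Vn)| apply HMn]).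
  assert (Tm : 0 <= total_mass mu) by (apply sR_nonneg; intros a Ha; apply (valid_in mu a Vm Ha)).
  assert (Tn0 : 0 <= total_mass nu) by (apply sR_nonneg; intros a Ha; apply (valid_in nu a Vn Ha)).
  set (X := R1 * R2 * total_mass mu * total_mass nu * Mmu * Mnu).
  set (T := total_mass mu * total_mass nu).
  assert (HT : 0 <= T) by (apply Rmult_le_pos; auto).
  assert (Hall : forall m, Cmod (osc_sum R1 R2 mu nu) <= 200 * sqrt X + T / nnR m)
    by (intros; apply bound_m; auto).
  assert (Hmain : Cmod (osc_sum R1 R2 mu nu) <= 200 * sqrt X).
  { destruct (Rle_lt_dec (Cmod (osc_sum R1 R2 mu nu)) (200 * sqrt X)) as [h|h]; auto. exfalso.
    set (d := Cmod (osc_sum R1 R2 mu nu) - 200 * sqrt X).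
    assert (Hd : 0 < d) by (unfold d; lra).
    destruct (archimed (T / d)) as [U1 U2].
    assert (HTd : 0 <= T / d) by (unfold Rdiv; apply Rmult_le_pos; auto; apply Rlt_le, Rinv_0_lt_compat; auto).
    assert (Hu : (0 <= up (T / d))%Z) by (apply le_IZR; simpl; lra).
    set (m := Z.to_nat (up (T / d))).
    assert (Hm : T / d < INR m) by (unfold m; rewrite INR_IZR_INZ, Z2Nat.id; auto).
    assert (Hn : T / d < nnR m) by (unfold nnR; pose proof (pos_INR m); lra).
    assert (T / nnR m < d).
    { pose proof (nnR_ge1 m). apply Rmult_lt_reg_r with (nnR m). lra.
      replace (T / nnR m * nnR m) with T by (field; lra).
      apply Rmult_lt_reg_r with (/ d). apply Rinv_0_lt_compat; auto.
      replace (d * nnR m * / d) with (nnR m) by (field; lra). exact Hn. }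
    specialize (Hall m). unfold d in H. lra. }
  replace (200 * sqrt (R1 * R2) * sqrt (total_mass mu) * sqrt (total_mass nu) * sqrt Mmu * sqrt Mnu)
    with (200 * sqrt X). exact Hmain.
  unfold X. assert (0 <= R1 * R2) by nra.
  rewrite !sqrt_mult_alt; repeat apply Rmult_le_pos; auto; try lra.
Qed.
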